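(* Let $G=A\rtimes_\alpha H$ be a finite group, where $A\cong \mathbb{Z}_p^r$ for a prime $p$, $\alpha:H\to\mathrm{Aut}(A)$ is an action of $H$ on $A$, and $|H|$ is not divisible by $p$. Let $A'\le A$ be the subgroup of $H$-invariant elements. Then $A'$ has an $H$-invariant complement $A''\le A$ with the following property: whenever $G$ acts on a set $X$ such that the subgroup $H$ acts trivially on $X$, the subgroup $A''$ also acts trivially on $X$. *)

(* Defs.v *)
From mathcomp Require Import all_boot all_fingroup all_solvable.
Set Implicit Arguments. Unset Strict Implicit. Unset Printing Implicit Defensive.
Local Open Scope group_scope.

Definition is_gaction (gT : finGroupType) (G : {set gT}) (X : Type)
    (to : X -> gT -> X) : Prop :=
  (forall x : X, to x 1 = x) /\
  (forall x : X, {in G &, forall g h, to x (g * h) = to (to x g) h}).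

Definition acts_trivially (gT : finGroupType) (K : {set gT}) (X : Type)
    (to : X -> gT -> X) : Prop :=
  forall x : X, {in K, forall k, to x k = x}.

(* Main.v *)
Require Import Defs.
From mathcomp Require Import all_boot all_fingroup all_solvable.
Local Open Scope group_scope.

Theorem lemma5p1 (gT : finGroupType) (G A H : {group gT}) (p r : nat) :
  prime p ->
  A ><| H = G ->
  p.-abelem A -> #|A| = (p ^ r)%N ->
  ~~ (p %| #|H|)%N ->
  exists2 A'' : {group gT},
    [/\ A'' \subset A, H \subset 'N(A''),
        'C_A(H) :&: A'' = 1 & 'C_A(H) * A'' = A]
    & forall (X : Type) (to : X -> gT -> X),
        is_gaction G to -> acts_trivially H to -> acts_trivially A'' to.
Proof.
move=> pr_p defG abA oA npH.
have [_ defAH nAH tiAH] := sdprodP defG.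
have abelA := abelem_abelian abA.
have coAH : coprime #|A| #|H|.
  rewrite oA; case: r oA => [|r] _; first by rewrite expn0 coprime1n.
  by rewrite coprime_pexpl // prime_coprime.
have sRA : [~: A, H] \subset A by rewrite commg_subl.
exists [~: A, H]%G; first split => //.
- exact: commg_normr.
- rewrite setIC setIA (setIidPl sRA); exact: coprime_abel_cent_TI.
- have nRA : A \subset 'N([~: A, H]) by exact: sub_abelian_norm.
  have sCA : 'C_A(H) \subset A := subsetIl _ _.
  have nRC : 'C_A(H) \subset 'N([~: A, H]) := subset_trans sCA nRA.
  have coRH : coprime #|[~: A, H]| #|H| := coprimeSg sRA coAH.
  have solR : solvable [~: A, H] := abelian_sol (abelianS sRA abelA).
  have eqQ := coprime_norm_quotient_cent nAH (commg_normr H A) coRH solR.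
  have sAC : A \subset [~: A, H] * 'C_A(H).
    rewrite -quotientSK // eqQ subsetI subxx /=.
    exact: quotient_cents2r.
  rewrite (normC nRC); apply/eqP; rewrite eqEsubset sAC andbT.
  by rewrite mul_subG.
- move=> X to [to1 toM] trH.
  have sAG : A \subset G by rewrite -defAH mulG_subl.
  have sHG : H \subset G by rewrite -defAH mulG_subr.
  suff key : forall k, k \in [~: A, H] -> k \in G /\ forall y, to y k = y.
    by move=> x k /key [_ ->].
  move=> k /gen_prodgP [n [c Hc ->]].
  apply: (big_ind (fun g => g \in G /\ forall y, to y g = y)).
  + by rewrite group1; split.
  + move=> g1 g2 [G1 T1] [G2 T2]; rewrite groupM //; split => // y.
    by rewrite toM // T1 T2.
  + move=> i _; case/imset2P: (Hc i) => a h Aa Hh ->.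
    have Ga := subsetP sAG a Aa; have Gh := subsetP sHG h Hh.
    rewrite groupR //; split => // y.
    rewrite /commg /conjg !mulgA.
    rewrite toM ?groupM ?groupV // toM ?groupM ?groupV // toM ?groupV //.
    have HhV : h^-1 \in H by rewrite groupV.
    rewrite (trH _ _ Hh) (trH _ _ HhV) -toM ?groupV //.
    by rewrite mulVg to1.
Qed.
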